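(* Let $n\geq 2$ and let $\mathcal{G}=(\mathcal{V},\mathcal{E})$ be a directed graph on $\mathcal{V}=\{1,\ldots,n\}$ in which every node has at least one outgoing edge, with hyperlink matrix $A$, let $m\in(0,1)$, and let $x^*$ be the PageRank vector. Let $p_1,\ldots,p_n>0$ with $\sum_{i=1}^n p_i=1$. Consider the following randomized algorithm. Initially $x_i(0)=z_i(0)=m/n$ for all $i\in\mathcal{V}$. At each time $k\geq 0$, a page $\theta(k)\in\mathcal{V}$ is selected, the sequence $\{\theta(k)\}$ being i.i.d. with $\mathrm{Prob}\{\theta(k)=i\}=p_i$ for every $i\in\mathcal{V}$, and each page $i\in\mathcal{V}$ updates $$x_i(k+1)=\begin{cases}x_i(k)+\frac{1-m}{n_{\theta(k)}}z_{\theta(k)}(k)&\text{if } i\in\mathcal{L}^{\text{out}}_{\theta(k)},\\ x_i(k)&\text{otherwise,}\end{cases}$$ $$z_i(k+1)=\begin{cases}0&\text{if } i=\theta(k),\\ z_i(k)+\frac{1-m}{n_{\theta(k)}}z_{\theta(k)}(k)&\text{if } i\in\mathcal{L}^{\text{out}}_{\theta(k)},\\ z_i(k)&\text{otherwise.}\end{cases}$$ Then $x(k)\to x^*$ as $k\to\infty$ with probability $1$.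
   Context: Write $(i,j)\in\mathcal{E}$ if page $i$ has a link to page $j$. $\mathcal{L}_j^{\text{out}}=\{i:(j,i)\in\mathcal{E}\}$ and $n_j=|\mathcal{L}_j^{\text{out}}|\geq 1$. The hyperlink matrix $A=(a_{ij})$ is defined by $a_{ij}=1/n_j$ if $i\in\mathcal{L}_j^{\text{out}}$ and $a_{ij}=0$ otherwise (column stochastic). The PageRank vector $x^*$ satisfies $x^*=(1-m)Ax^*+\frac{m}{n}\mathbf{1}_n$ and $\mathbf{1}_n^Tx^*=1$. Here $x(k)=(x_1(k),\ldots,x_n(k))^T$. *)

(* Defs.v *)
From HB Require Import structures.
From mathcomp Require Import all_boot all_order all_algebra.
From mathcomp Require Import all_classical all_reals all_analysis.
Set Implicit Arguments. Unset Strict Implicit. Unset Printing Implicit Defensive.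
Import Order.TTheory GRing.Theory Num.Theory.
Local Open Scope ring_scope.

(* Graph on 'I_n given by an edge relation: E j i means page j links to page i. *)
Definition outdeg (n : nat) (E : rel 'I_n) (j : 'I_n) : nat := #|[set i | E j i]|.

Definition hyperlink (R : fieldType) (n : nat) (E : rel 'I_n) : 'M[R]_n :=
  \matrix_(i, j) (if E j i then ((outdeg E j)%:R)^-1 else 0).

Definition pr_step (R : fieldType) (n : nat) (E : rel 'I_n) (m : R) (th : 'I_n)
  (s : ('I_n -> R) * ('I_n -> R)) : ('I_n -> R) * ('I_n -> R) :=
  let x := s.1 in let z := s.2 in
  let c := (1 - m) / (outdeg E th)%:R * z th in
  (fun i => if E th i then x i + c else x i,
   fun i => if i == th then 0 else if E th i then z i + c else z i).

Fixpoint pr_state (R : fieldType) (n : nat) (E : rel 'I_n) (m : R)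
  (th : nat -> 'I_n) (k : nat) : ('I_n -> R) * ('I_n -> R) :=
  match k with
  | 0 => (fun _ => m / n%:R, fun _ => m / n%:R)
  | k'.+1 => pr_step E m (th k') (pr_state E m th k')
  end.

(* Main.v *)
Require Import Defs.
From HB Require Import structures.
From mathcomp Require Import all_boot all_order all_algebra.
From mathcomp Require Import all_classical all_reals all_analysis.
From mathcomp Require Import zify ring lra.
Import Order.TTheory GRing.Theory Num.Theory numFieldNormedType.Exports.
Local Open Scope classical_set_scope.
Local Open Scope ring_scope.
Set Implicit Arguments. Unset Strict Implicit. Unset Printing Implicit Defensive.

Definition cylS (T : Type) (n : nat) (theta : nat -> T -> 'I_n) (s : seq nat)
  (f : nat -> 'I_n) : set T := \big[setI/setT]_(k <- s) [set w | theta k w = f k].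
Definition evS (T : Type) (n : nat) (theta : nat -> T -> 'I_n)
  (Q : (nat -> 'I_n) -> Prop) : set T := [set w | Q (fun j => theta j w)].
Definition detP (n : nat) (t : nat) (Q : (nat -> 'I_n) -> Prop) :=
  forall f g, (forall j, (j < t)%N -> f j = g j) -> Q f -> Q g.
Definition upd (n : nat) (f : nat -> 'I_n) (t : nat) (i : 'I_n) : nat -> 'I_n :=
  fun j => if j == t then i else f j.

Lemma cylP (T : Type) (n : nat) (theta : nat -> T -> 'I_n) s f w :
  cylS theta s f w <-> forall k, k \in s -> theta k w = f k.
Proof.
rewrite /cylS; elim: s => [|a s IH]; first by rewrite big_nil; split.
rewrite big_cons; split.
- move=> [ha /IH hs] k; rewrite inE => /orP [/eqP -> //|]; exact: hs.
- move=> h; split; first by apply: h; rewrite mem_head.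
  by apply/IH => k ks; apply: h; rewrite inE ks orbT.
Qed.

Lemma bigUP (T : Type) (I : eqType) (r : seq I) (F : I -> set T) w :
  (\big[setU/set0]_(i <- r) F i) w <-> exists i, i \in r /\ F i w.
Proof.
elim: r => [|a r IH]; first by rewrite big_nil; split => // [[i []]].
rewrite big_cons; split.
- case=> [h|/IH [i [ir h]]]; first by exists a; rewrite mem_head.
  by exists i; rewrite inE ir orbT.
- move=> [i []]; rewrite inE => /orP [/eqP -> h|ir h]; first by left.
  by right; apply/IH; exists i.
Qed.

Lemma bigUPo (T : Type) (n : nat) (F : 'I_n -> set T) w :
  (\big[setU/set0]_(i < n) F i) w <-> exists i, F i w.
Proof.
rewrite bigUP; split; first by move=> [i [_ h]]; exists i.
by move=> [i h]; exists i; rewrite mem_index_enum.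
Qed.

Lemma ev_split (T : Type) (n : nat) (theta : nat -> T -> 'I_n) t
  (Q : (nat -> 'I_n) -> Prop) s f :
  detP t.+1 Q -> t \notin s ->
  evS theta Q `&` cylS theta s f =
  \big[setU/set0]_(i < n)
     (evS theta (fun g => Q (upd g t i)) `&` cylS theta (t :: s) (upd f t i)).
Proof.
move=> dQ ts; apply/seteqP; split => w.
- case=> Qw /cylP cw; apply/bigUPo; exists (theta t w); split.
  + apply: dQ Qw => j _; rewrite /upd; by case: eqP => [->|].
  + apply/cylP => k; rewrite inE => /orP [/eqP ->|ks]; rewrite /upd.
      by rewrite eqxx.
    case: eqP => [kt|_]; last exact: cw.
    by rewrite -kt ks in ts.
- move/bigUPo => [i [Qi /cylP ci]].
  have ht : theta t w = i by have := ci t (mem_head _ _); rewrite /upd eqxx.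
  split.
  + apply: dQ Qi => j _; rewrite /upd; case: eqP => [->|//]; by rewrite ht.
  + apply/cylP => k ks; have := ci k; rewrite inE ks orbT => /(_ isT).
    rewrite /upd; case: eqP => [kt|//]; by rewrite -kt ks in ts.
Qed.

Lemma PfinE (R : realType) (d : measure_display) (T : measurableType d)
  (P : probability T R) A : measurable A -> P A = (fine (P A))%:E.
Proof. by move=> mA; rewrite fineK //; apply: fin_num_measure. Qed.

Lemma cyl_meas (R : realType) (d : measure_display) (T : measurableType d)
  n (theta : nat -> T -> 'I_n) s f :
  (forall k (i : 'I_n), measurable (theta k @^-1` [set i])) ->
  measurable (cylS theta s f).
Proof. by move=> hm; apply: bigsetI_measurable => k _; apply: hm. Qed.

Lemma det_main (R : realType) n (d : measure_display) (T : measurableType d)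
  (P : probability T R) (theta : nat -> T -> 'I_n) (p : 'I_n -> R) (i0 : 'I_n) :
  (forall k (i : 'I_n), measurable (theta k @^-1` [set i])) ->
  (forall s f, uniq s -> P (cylS theta s f) = (\prod_(k <- s) p (f k))%:E) ->
  forall t Q, detP t Q -> measurable (evS theta Q) /\
   forall s f, uniq s -> all (leq t) s ->
     P (evS theta Q `&` cylS theta s f) =
     (P (evS theta Q) * (\prod_(k <- s) p (f k))%:E)%E.
Proof.
move=> hm hP t; elim: t => [|t IH] Q dQ.
  case: (pselect (Q (fun _ => i0))) => [q0|nq0].
    have -> : evS theta Q = setT.
      by apply/seteqP; split => w // _; apply: dQ q0 => j; rewrite ltn0.
    split; first exact: measurableT.
    by move=> s f us _; rewrite setTI probability_setT mul1e; apply: hP.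
  have -> : evS theta Q = set0.
    apply/seteqP; split => w // Qw; apply: nq0; apply: dQ Qw => j; by rewrite ltn0.
  split; first exact: measurable0.
  by move=> s f _ _; rewrite set0I measure0 mul0e.
have dQi i : detP t (fun g => Q (upd g t i)).
  move=> f g fg; apply: dQ => j jt; rewrite /upd; case: eqP => // /eqP jne.
  apply: fg; lia.
have mQi i := (IH _ (dQi i)).1.
have meas s f : measurable (\big[setU/set0]_(i < n)
     (evS theta (fun g => Q (upd g t i)) `&` cylS theta (t :: s) (upd f t i))).
  by apply: bigsetU_measurable => i _; apply: measurableI; [apply: mQi|apply: cyl_meas].
have triv s f : trivIset setT (fun i => 
     (evS theta (fun g => Q (upd g t i)) `&` cylS theta (t :: s) (upd f t i))).
  move=> i j _ _ [w [[_ /cylP ci] [_ /cylP cj]]].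
  have := ci t (mem_head _ _); have := cj t (mem_head _ _).
  by rewrite /upd eqxx => -> .
have key s f : uniq s -> all (leq t.+1) s ->
   P (evS theta Q `&` cylS theta s f) =
   (\sum_(i < n) P (evS theta (fun g => Q (upd g t i))) * (p i * \prod_(k <- s) p (f k))%:E)%E.
  move=> us als.
  have ts : t \notin s.
    apply/negP => ts; move/allP: als => /(_ _ ts); by rewrite ltnn.
  rewrite (ev_split theta f dQ ts) measure_bigsetU_ord; last 2 first.
  - move=> i; apply: measurableI; [apply: mQi|apply: cyl_meas => //].
  - exact: triv.
  apply: eq_bigr => i _ /=; rewrite (IH _ (dQi i)).2 /=; last 2 first.
  - by rewrite ts us.
  - rewrite leqnn /=; apply/allP => k ks; move/allP: als => /(_ _ ks); lia.
  congr (_ * _)%E; congr EFin; rewrite big_cons /upd eqxx; congr (_ * _).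
  apply: eq_big_seq => k ks; case: eqP => // kt; by rewrite -kt ks in ts.
have mQ : measurable (evS theta Q).
  rewrite -[evS theta Q]setIT.
  have -> : [set: T] = cylS theta [::] (fun _ => i0) by rewrite /cylS big_nil.
  rewrite (ev_split theta (fun _ => i0) dQ (negbT (in_nil t))); exact: meas.
split => // s f us als.
rewrite key //.
have -> : P (evS theta Q) = P (evS theta Q `&` cylS theta [::] (fun _ => i0)).
  by rewrite /cylS big_nil setIT.
rewrite key //.
under [X in X = _]eq_bigr => i _ do rewrite {1}(PfinE P (mQi i)) -EFinM.
rewrite big_nil.
under [X in (X * _)%E]eq_bigr => i _ do rewrite {1}(PfinE P (mQi i)) -EFinM.
rewrite !sumEFin -EFinM; congr EFin; rewrite mulr_suml.
by apply: eq_bigr => i _; rewrite mulr1 mulrA.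
Qed.

Definition winP n (i0 : 'I_n) (t : nat) (f : nat -> 'I_n) :=
  forall j, (j < n)%N -> f (t + j)%N = insubd i0 j.
Definition wseq n (i0 : 'I_n) (t : nat) : nat -> 'I_n := fun k => insubd i0 (k - t)%N.

Lemma win_cyl (T : Type) n (theta : nat -> T -> 'I_n) (i0 : 'I_n) t :
  evS theta (winP i0 t) = cylS theta (iota t n) (wseq i0 t).
Proof.
apply/seteqP; split => w.
- move=> h; apply/cylP => k; rewrite mem_iota => /andP [h1 h2].
  have -> : k = (t + (k - t))%N by lia.
  rewrite /wseq addKn; apply: h; lia.
- move/cylP => h j hj; rewrite h /wseq ?addKn // mem_iota; apply/andP; split; lia.
Qed.

Lemma prod_win (R : realType) n (i0 : 'I_n) (p : 'I_n -> R) t :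
  \prod_(k <- iota t n) p (wseq i0 t k) = \prod_(j < n) p j.
Proof.
rewrite -[t]addn0 iotaDl big_map -{1}[n]subn0 -/(index_iota 0 n) big_mkord addn0.
apply: eq_bigr => j _; rewrite /wseq addKn; congr p; apply: val_inj.
by rewrite val_insubd ltn_ord.
Qed.

Definition QJN n (i0 : 'I_n) (J N : nat) (f : nat -> 'I_n) :=
  forall k, (k < N)%N -> ~ winP i0 ((J + k) * n) f.

Lemma QJN_det n (i0 : 'I_n) J N : detP ((J + N) * n) (QJN i0 J N).
Proof.
move=> f g fg Qf k kN wg; apply: (Qf k kN) => j jn; rewrite fg; first exact: wg.
nia.
Qed.

Lemma PQJN (R : realType) n (d : measure_display) (T : measurableType d)
  (P : probability T R) (theta : nat -> T -> 'I_n) (p : 'I_n -> R) (i0 : 'I_n) J :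
  (forall k (i : 'I_n), measurable (theta k @^-1` [set i])) ->
  (forall s f, uniq s -> P (cylS theta s f) = (\prod_(k <- s) p (f k))%:E) ->
  forall N, P (evS theta (QJN i0 J N)) = ((1 - \prod_(j < n) p j) ^+ N)%:E.
Proof.
move=> hm hP; elim => [|N IH].
  have -> : evS theta (QJN i0 J 0) = setT.
    by apply/seteqP; split => // w _ k; rewrite ltn0.
  by rewrite probability_setT expr0.
set t := ((J + N) * n)%N.
have dm := det_main i0 hm hP (@QJN_det n i0 J N).
have -> : evS theta (QJN i0 J N.+1) =
    evS theta (QJN i0 J N) `\` cylS theta (iota t n) (wseq i0 t).
  rewrite -win_cyl; apply/seteqP; split => w.
  - move=> h; split; first by move=> k kN; apply: h; lia.
    by apply: h.
  - move=> [h1 h2] k; rewrite ltnS leq_eqVlt => /orP [/eqP ->|kN]; first exact: h2.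
    exact: h1.
have hD : P (evS theta (QJN i0 J N) `\` cylS theta (iota t n) (wseq i0 t)) =
  (P (evS theta (QJN i0 J N)) - P (evS theta (QJN i0 J N) `&` cylS theta (iota t n) (wseq i0 t)))%E.
  apply: measureD.
  - exact: dm.1.
  - exact: cyl_meas.
  - by apply: (le_lt_trans (probability_le1 P dm.1)); rewrite ltry.
rewrite hD.
rewrite dm.2; first last.
- by apply/allP => k; rewrite mem_iota => /andP [].
- exact: iota_uniq.
by rewrite prod_win IH -EFinM -EFinB exprS; congr EFin; ring.
Qed.

Definition GJ (T : Type) n (theta : nat -> T -> 'I_n) (i0 : 'I_n) (J : nat) : set T :=
  \bigcap_k ~` cylS theta (iota ((J + k) * n) n) (wseq i0 ((J + k) * n)).

Lemma geo_small (R : realType) (r z : R) : 0 <= z < 1 ->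
  (forall N, r <= z ^+ N) -> r <= 0.
Proof.
move=> /andP [z0 z1] h; rewrite leNgt; apply/negP => r0.
have := @cvg_expr R z; rewrite ger0_norm // => /(_ z1) /cvgrPdist_lt /(_ r r0).
move=> [N _ HN]; have := HN N (leqnn N); rewrite /= sub0r normrN ger0_norm ?exprn_ge0 //.
have := h N; lra.
Qed.

Lemma GJ_null (R : realType) n (d : measure_display) (T : measurableType d)
  (P : probability T R) (theta : nat -> T -> 'I_n) (p : 'I_n -> R) (i0 : 'I_n) J :
  (forall k (i : 'I_n), measurable (theta k @^-1` [set i])) ->
  (forall s f, uniq s -> P (cylS theta s f) = (\prod_(k <- s) p (f k))%:E) ->
  (forall i, 0 < p i) ->
  measurable (GJ theta i0 J) /\ P (GJ theta i0 J) = 0%E.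
Proof.
move=> hm hP hp.
have mG : measurable (GJ theta i0 J).
  by apply: bigcapT_measurable => k; apply: measurableC; apply: cyl_meas.
split => //.
have hle N : (P (GJ theta i0 J) <= ((1 - \prod_(j < n) p j) ^+ N)%:E)%E.
  rewrite -(PQJN i0 J hm hP N).
  apply: le_measure; rewrite ?inE //.
  - exact: (det_main i0 hm hP (@QJN_det n i0 J N)).1.
  - move=> w hw k kN hwin; apply: (hw k Logic.I).
    by rewrite -win_cyl.
have q0 : 0 < \prod_(j < n) p j by apply: prodr_gt0 => j _.
have q1 : 0 <= 1 - \prod_(j < n) p j.
  have : (0 <= P (evS theta (QJN i0 J 1)))%E by apply: measure_ge0.
  by rewrite (PQJN i0 J hm hP 1) expr1 lee_fin.
rewrite (PfinE P mG); congr EFin; apply/eqP; rewrite eq_le; apply/andP; split.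
- apply: (@geo_small R _ (1 - \prod_(j < n) p j)); first by apply/andP; split => //; lra.
  by move=> N; rewrite -lee_fin -(PfinE P mG).
- by rewrite fine_ge0 // measure_ge0.
Qed.

Definition Zs (R : realType) n (E : rel 'I_n) (m : R) th k := (pr_state E m th k).2.
Definition Xs (R : realType) n (E : rel 'I_n) (m : R) th k := (pr_state E m th k).1.
Definition Ss (R : realType) n (E : rel 'I_n) (m : R) th k := \sum_(i < n) Zs E m th k i.

Lemma Z_ge0 (R : realType) n (E : rel 'I_n) (m : R) th :
  0 < m < 1 -> forall k i, 0 <= Zs E m th k i.
Proof.
move=> /andP [m0 m1]; elim=> [|k IH] i.
  by rewrite /Zs /=; apply: divr_ge0; [lra|exact: ler0n].
rewrite /Zs /= /pr_step /=; case: eqP => _ //; case: ifP => _; last exact: IH.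
apply: addr_ge0; first exact: IH.
apply: mulr_ge0; last exact: IH.
by apply: divr_ge0; [lra|exact: ler0n].
Qed.

Lemma Z_mono (R : realType) n (E : rel 'I_n) (m : R) th k i :
  0 < m < 1 -> i != th k -> Zs E m th k i <= Zs E m th k.+1 i.
Proof.
move=> hm hi; have := Z_ge0 E th hm k (th k); have := Z_ge0 E th hm k i.
move: hm => /andP [m0 m1].
rewrite /Zs /= /pr_step /= (negbTE hi); case: ifP => _ // h1 h2.
rewrite lerDl; apply: mulr_ge0 => //.
by apply: divr_ge0; [lra|exact: ler0n].
Qed.

Lemma sum_if_E n (E : rel 'I_n) (R : realType) j (c : R) :
  \sum_(i < n) (if E j i then c else 0) = c * (outdeg E j)%:R.
Proof.
rewrite -big_mkcond /= (eq_bigl (fun i => i \in [set i | E j i]%SET)); last first.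
  by move=> i /=; rewrite inE.
by rewrite sumr_const mulr_natr.
Qed.

Lemma S_step (R : realType) n (E : rel 'I_n) (m : R) th k :
  (forall i : 'I_n, ~~ E i i) -> (forall j : 'I_n, (1 <= outdeg E j)%N) ->
  Ss E m th k.+1 = Ss E m th k - m * Zs E m th k (th k).
Proof.
move=> hE hod; rewrite /Ss /Zs /= /pr_step /=.
set z := (pr_state E m th k).2; set t := th k.
set c := (1 - m) / (outdeg E t)%:R * z t.
have h i : (if i == t then 0 else if E t i then z i + c else z i) =
    z i + (if E t i then c else 0) - (if i == t then z i else 0).
  case: eqP => [->|_]; first by rewrite (negbTE (hE t)); ring.
  by case: ifP => _; ring.
rewrite (eq_bigr _ (fun i _ => h i)) sumrB big_split /= sum_if_E.
rewrite -big_mkcond big_pred1_eq /c.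
have od : (outdeg E t)%:R != 0 :> R by rewrite pnatr_eq0 -lt0n.
by field.
Qed.

Lemma S_mono (R : realType) n (E : rel 'I_n) (m : R) th k k' :
  0 < m < 1 -> (forall i : 'I_n, ~~ E i i) -> (forall j : 'I_n, (1 <= outdeg E j)%N) ->
  (k <= k')%N -> Ss E m th k' <= Ss E m th k.
Proof.
move=> hm hE hod kk; rewrite -(subnKC kk); elim: (k' - k)%N => [|d IH].
  by rewrite addn0.
rewrite addnS S_step //; have := Z_ge0 E th hm (k + d)%N (th (k + d)%N).
move: hm => /andP [m0 m1] hz.
have := mulr_ge0 (ltW m0) hz; lra.
Qed.

Lemma Z_mono_win (R : realType) n (E : rel 'I_n) (m : R) th t i :
  0 < m < 1 -> forall j, (forall l, (l < j)%N -> th (t + l)%N != i) ->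
  Zs E m th t i <= Zs E m th (t + j)%N i.
Proof.
move=> hm; elim=> [|j IH] h; first by rewrite addn0.
have h' : forall l, (l < j)%N -> th (t + l)%N != i.
  by move=> l lj; exact: (h l (leqW lj)).
apply: (le_trans (IH h')).
rewrite addnS; apply: Z_mono => //; rewrite eq_sym; apply: h; lia.
Qed.

Lemma win_decr (R : realType) n (E : rel 'I_n) (m : R) th t (i0 : 'I_n) :
  0 < m < 1 -> (forall i : 'I_n, ~~ E i i) -> (forall j : 'I_n, (1 <= outdeg E j)%N) ->
  (forall j, (j < n)%N -> th (t + j)%N = insubd i0 j) ->
  Ss E m th (t + n)%N <= (1 - m) * Ss E m th t.
Proof.
move=> hm hE hod hw.
have key : forall j, (j <= n)%N ->
  Ss E m th (t + j)%N <= Ss E m th t - m * \sum_(i < n | (i < j)%N) Zs E m th t i.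
  elim=> [|j IH] hj.
    by rewrite addn0 big_pred0 // mulr0 subr0.
  have hjn : (j < n)%N by lia.
  pose o := Ordinal hjn.
  have tho : th (t + j)%N = o by rewrite hw //; apply: val_inj; rewrite val_insubd hjn.
  rewrite addnS S_step // tho.
  have hz : Zs E m th t o <= Zs E m th (t + j)%N o.
    apply: Z_mono_win => // l lj; rewrite hw; last lia.
    have ln : (l < n)%N by lia.
    rewrite -val_eqE /= val_insubd ln; lia.
  rewrite (bigD1 o) //=.
  rewrite (eq_bigl (fun i : 'I_n => (i < j)%N)); last first.
    by move=> i; rewrite -val_eqE /= ltnS ltn_neqAle andbC.
  have := IH (ltnW hj); have hz0 := Z_ge0 E th hm t o; move: hm => /andP [m0 m1].
  move=> h1; rewrite mulrDr.
  have := ler_wpM2l (ltW m0) hz; lra.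
have := key n (leqnn n).
rewrite (eq_bigl (fun i => true)); last by move=> i; rewrite ltn_ord.
by rewrite /Ss; lra.
Qed.

Lemma decay (R : realType) n (E : rel 'I_n) (m : R) th (i0 : 'I_n) :
  (0 < n)%N -> 0 < m < 1 -> (forall i : 'I_n, ~~ E i i) ->
  (forall j : 'I_n, (1 <= outdeg E j)%N) ->
  (forall J, exists k, forall j, (j < n)%N -> th ((J + k) * n + j)%N = insubd i0 j) ->
  forall N, exists K, Ss E m th K <= (1 - m) ^+ N * Ss E m th 0.
Proof.
move=> n0 hm hE hod inf; elim=> [|N [K IH]]; first by exists 0%N; rewrite expr0 mul1r.
have [k hk] := inf K; exists ((K + k) * n + n)%N.
have h1 := win_decr hm hE hod hk.
have h2 : Ss E m th ((K + k) * n)%N <= Ss E m th K.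
  by apply: S_mono => //; nia.
rewrite exprS -mulrA; apply: (le_trans h1); apply: ler_wpM2l.
  by move: hm => /andP [_ m1]; lra.
exact: le_trans h2 IH.
Qed.

Lemma X_inv (R : realType) n (E : rel 'I_n) (m : R) th :
  (forall i : 'I_n, ~~ E i i) -> forall k i,
  Xs E m th k i = m / n%:R + (1 - m) *
    \sum_(j < n) (if E j i then ((outdeg E j)%:R)^-1 else 0) * (Xs E m th k j - Zs E m th k j).
Proof.
move=> hE; elim=> [|k IH] i.
  rewrite big1 /Xs /Zs /=; first by ring.
  by move=> j _; rewrite subrr mulr0.
rewrite /Xs /Zs /= /pr_step /=.
have IHi := IH i; rewrite /Xs /Zs in IHi.
set x := (pr_state E m th k).1 in IHi *; set z := (pr_state E m th k).2 in IHi *.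
set t := th k.
set c := (1 - m) / (outdeg E t)%:R * z t.
have hY j : (if E t j then x j + c else x j) -
   (if j == t then 0 else if E t j then z j + c else z j) =
   (x j - z j) + (if j == t then z t else 0).
  case: eqP => [->|_]; first by rewrite (negbTE (hE t)); ring.
  by case: ifP => _; ring.
under eq_bigr => j _ do rewrite hY mulrDr.
have hs : forall F : 'I_n -> R,
   \sum_(j < n) F j * (if j == t then z t else 0) = F t * z t.
  move=> F; rewrite (bigD1 t) //= eqxx big1 ?addr0 // => j /negbTE ->.
  by rewrite mulr0.
rewrite big_split /= hs /c; case: ifP => _; rewrite IHi; ring.
Qed.

Lemma err_bound (R : realType) n (E : rel 'I_n) (m : R) th (xs : 'I_n -> R) :
  0 < m < 1 -> (forall i : 'I_n, ~~ E i i) ->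
  (forall j : 'I_n, (1 <= outdeg E j)%N) ->
  (forall i, xs i = (1 - m) *
     \sum_(j < n) (if E j i then ((outdeg E j)%:R)^-1 else 0) * xs j + m / n%:R) ->
  forall k i, m * `|Xs E m th k i - xs i| <= Ss E m th k.
Proof.
move=> hm hE hod hx k i0.
pose A (j i : 'I_n) : R := if E j i then ((outdeg E j)%:R)^-1 else 0.
have A0 j i : 0 <= A j i by rewrite /A; case: ifP => _ //; rewrite invr_ge0 ler0n.
have hA j : \sum_(i < n) A j i = 1.
  rewrite /A sum_if_E mulVf // pnatr_eq0 -lt0n; exact: hod.
pose e j := Xs E m th k j - xs j.
have he i : e i = (1 - m) * \sum_(j < n) A j i * (e j - Zs E m th k j).
  have -> : \sum_(j < n) A j i * (e j - Zs E m th k j) =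
     \sum_(j < n) A j i * (Xs E m th k j - Zs E m th k j) - \sum_(j < n) A j i * xs j.
    by rewrite -sumrB; apply: eq_bigr => j _; rewrite /e; ring.
  by rewrite /e X_inv // hx; ring.
have m1 : 0 <= 1 - m by move: hm => /andP [_ ?]; lra.
have S0 : 0 <= Ss E m th k by apply: sumr_ge0 => j _; apply: Z_ge0.
pose Se := \sum_(j < n) `|e j|.
have h1 : Se <= (1 - m) * \sum_(i < n) \sum_(j < n) A j i * `|e j - Zs E m th k j|.
  rewrite mulr_sumr; apply: ler_sum => i _; rewrite he normrM ger0_norm //.
  apply: ler_wpM2l => //; apply: (le_trans (ler_norm_sum _ _ _)).
  by apply: ler_sum => j _; rewrite normrM ger0_norm.
have h2 : \sum_(i < n) \sum_(j < n) A j i * `|e j - Zs E m th k j| =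
    \sum_(j < n) `|e j - Zs E m th k j|.
  rewrite exchange_big; apply: eq_bigr => j _; by rewrite -mulr_suml hA mul1r.
have h3 : \sum_(j < n) `|e j - Zs E m th k j| <= Se + Ss E m th k.
  rewrite /Se /Ss -big_split; apply: ler_sum => j _.
  by rewrite -[X in _ <= _ + X]ger0_norm ?ler_normB //; apply: Z_ge0.
have h4 : `|e i0| <= Se.
  rewrite /Se (bigD1 i0) //= lerDl; exact: sumr_ge0.
have h5 : m * `|e i0| <= m * Se by apply: ler_wpM2l => //; move: hm => /andP [? _]; lra.
have h6 : (1 - m) * Se <= (1 - m) * (Se + Ss E m th k) - (1 - m) * Ss E m th k by lra.
have h7 : 0 <= m * Ss E m th k by apply: mulr_ge0 => //; move: hm => /andP [? _]; lra.
rewrite h2 in h1.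
have h8 := ler_wpM2l m1 h3.
rewrite -/(e i0); lra.
Qed.

Lemma det_conv (R : realType) n (E : rel 'I_n) (m : R) th (i0 : 'I_n) (xs : 'I_n -> R) :
  (0 < n)%N -> 0 < m < 1 -> (forall i : 'I_n, ~~ E i i) ->
  (forall j : 'I_n, (1 <= outdeg E j)%N) ->
  (forall i, xs i = (1 - m) *
     \sum_(j < n) (if E j i then ((outdeg E j)%:R)^-1 else 0) * xs j + m / n%:R) ->
  (forall J, exists k, forall j, (j < n)%N -> th ((J + k) * n + j)%N = insubd i0 j) ->
  forall i, (fun k => Xs E m th k i) @ \oo --> xs i.
Proof.
move=> n0 hm hE hod hx inf i.
have S0 : Ss E m th 0 = m.
  rewrite /Ss /Zs /= sumr_const card_ord -mulr_natr.
  have : n%:R != 0 :> R by rewrite pnatr_eq0 -lt0n.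
  by move=> ?; field.
move: (hm) => /andP [m0 m1].
apply/cvgrPdist_le => eps eps0.
have z1 : `|1 - m| < 1 by rewrite ger0_norm; lra.
have [N _ HN] := (cvgrPdist_lt _ _).1 (cvg_expr z1) eps eps0.
have := HN N (leqnn N); rewrite /= sub0r normrN ger0_norm ?exprn_ge0 //; last lra.
move=> hN.
have [K hK] := decay n0 hm hE hod inf N.
exists K => // k /= hk.
have h1 := err_bound th hm hE hod hx k i.
have h2 := S_mono th hm hE hod hk.
rewrite S0 in hK.
have h3 : (1 - m) ^+ N * m < eps * m by rewrite ltr_pM2r.
rewrite distrC; apply: ltW.
rewrite -(ltr_pM2l m0); lra.
Qed.

Unset Implicit Arguments.

Theorem proposition1 (R : realType) (n : nat) (E : rel 'I_n) (m : R)
  (xstar : 'cV[R]_n) (p : 'I_n -> R)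
  (d : measure_display) (T : measurableType d) (P : probability T R)
  (theta : nat -> T -> 'I_n) :
  (2 <= n)%N ->
  (forall i : 'I_n, ~~ E i i) ->
  (forall j : 'I_n, (1 <= outdeg E j)%N) ->
  0 < m < 1 ->
  xstar = (1 - m) *: (hyperlink R E *m xstar) + const_mx (m / n%:R) ->
  \sum_(i < n) xstar i 0 = 1 ->
  (forall i, 0 < p i) ->
  \sum_(i < n) p i = 1 ->
  (forall k (i : 'I_n), measurable (theta k @^-1` [set i])) ->
  (* i.i.d.: for every finite set of distinct times and prescribed values,
     the joint probability is the product of the p's *)
  (forall (s : seq nat) (f : nat -> 'I_n), uniq s ->
     P (\big[setI/setT]_(k <- s) [set w | theta k w = f k]) =
     (\prod_(k <- s) p (f k))%:E) ->
  {ae P, forall w, forall i : 'I_n,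
     (fun k => (pr_state E m (fun j => theta j w) k).1 i) @ \oo --> xstar i 0}.
Proof.
move=> n2 hE hod hm hx _ hp _ hmeas hiid.
have n0 : (0 < n)%N by lia.
pose i0 := Ordinal n0.
have hx' : forall i, xstar i 0 = (1 - m) *
     \sum_(j < n) (if E j i then ((outdeg E j)%:R)^-1 else 0) * xstar j 0 + m / n%:R.
  move=> i; rewrite {1}hx !mxE.
  congr (_ * _ + _); apply: eq_bigr => j _; by rewrite mxE.
have hP : forall s f, uniq s -> P (cylS theta s f) = (\prod_(k <- s) p (f k))%:E.
  exact: hiid.
have hae : \forall w \ae P, forall J, ~ GJ theta i0 J w.
  apply: ae_foralln => J.
  have [mG PG] := GJ_null i0 J hmeas hP hp.
  exists (GJ theta i0 J); split => // w /=; exact: contrapT.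
apply: filterS hae => w hw i.
have hc := @det_conv R n E m (fun j => theta j w) i0 (fun i => xstar i 0) n0 hm hE hod hx'.
apply: hc.
move=> J; apply: contrapT => nex; apply: (hw J) => k _ hc.
apply: nex; exists k; move: hc; rewrite -win_cyl => hwin j hj.
exact: hwin j hj.
Qed.
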